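(* For $k\geqslant 0$ let $B_k$ be the number of equivalence classes, with respect to the relation $\cong$, of ultrametric spaces $(X,d)\in\mathfrak U$ with $|X|=k+1$. Then for every $k\geqslant1$ $$B_k=\begin{cases}\dfrac{B_i(B_i+1)}{2}+\sum\limits_{j=0}^{i-1}B_{k-j-1}B_j, & \text{if } k=2i+1,\\[2mm] \sum\limits_{j=0}^{i-1}B_{k-j-1}B_j, & \text{if } k=2i,\end{cases}$$ and $B_1=B_2=1$, $B_3=2$.
   Context: $\operatorname{Sp}(X)=\{d(x,y):x\neq y\}$; $\mathfrak U$ is the class of finite ultrametric spaces $X$ with $|\operatorname{Sp}(X)|=|X|-1$. For a finite ultrametric space $X$ (assumed, up to isometry, to satisfy $X\cap\operatorname{Sp}(X)=\varnothing$), the representing tree $T_X$ is the labelled rooted tree defined recursively: for $X=\{x\}$ it is a single node labelled $x$; for $|X|\ge2$ the root is labelled $\operatorname{diam}X$ and has one child for each class $X_i$ of the equivalence relation $x\sim y\iff d(x,y)<\operatorname{diam}X$, that child being labelled $x$ if $X_i=\{x\}$ and otherwise labelled $\operatorname{diam}X_i$ and carrying the recursively constructed tree for $X_i$. $\overline{T}_X$ is $T_X$ with labels erased. For finite ultrametric spaces $X,Y$, $X\cong Y$ means that the rooted trees $\overline{T}_X$ and $\overline{T}_Y$ are isomorphic. *)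

(* Defs.v *)
From HB Require Import structures.
From mathcomp Require Import all_boot all_order all_algebra.
From mathcomp Require Import boolp classical_sets reals.
From Stdlib Require List Sorting.Permutation.
Set Implicit Arguments. Unset Strict Implicit. Unset Printing Implicit Defensive.
Import Order.TTheory GRing.Theory Num.Theory.
Local Open Scope ring_scope.

Inductive rtree : Type := RNode of seq rtree.

Inductive rtree_iso : rtree -> rtree -> Prop :=
| rtree_iso_node (ts us us' : seq rtree) :
    Permutation.Permutation us us' -> List.Forall2 rtree_iso ts us' ->
    rtree_iso (RNode ts) (RNode us).

Record ultrametric (R : realType) := Ultrametric {
  um_carrier :> finType;
  um_dist : um_carrier -> um_carrier -> R;
  um_ge0 : forall x y, 0 <= um_dist x y;
  um_eq0 : forall x y, um_dist x y = 0 <-> x = y;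
  um_sym : forall x y, um_dist x y = um_dist y x;
  um_ultra : forall x y z, um_dist x z <= Num.max (um_dist x y) (um_dist y z)
}.

Section Tree.
Variables (R : realType) (X : ultrametric R).
Local Notation d := (@um_dist R X).
Local Notation car := (um_carrier X).

Definition spectrum : seq R :=
  undup [seq d p.1 p.2 | p <- enum [pred p : (car * car)%type | p.1 != p.2]].

Definition diam (A : {set car}) : R :=
  \big[Num.max/0]_(x in A) \big[Num.max/0]_(y in A) d x y.

Definition um_classes (A : {set car}) : {set {set car}} :=
  [set [set y in A | d x y < diam A] | x in A].

(* unlabelled representing tree of the subspace A (fuel n >= #|A|) *)
Fixpoint rep_tree_fuel (n : nat) (A : {set car}) : rtree :=
  match n with
  | 0 => RNode [::]
  | n'.+1 => if (#|A| <= 1)%N then RNode [::]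
             else RNode [seq rep_tree_fuel n' B | B <- enum (um_classes A)]
  end.

Definition rep_tree : rtree := rep_tree_fuel #|car| [set: car].
End Tree.

Definition in_U (R : realType) (X : ultrametric R) : Prop :=
  size (spectrum X) = (#|um_carrier X| - 1)%N.

Definition um_cong (R : realType) (X Y : ultrametric R) : Prop :=
  rtree_iso (rep_tree X) (rep_tree Y).

(* "there are exactly n equivalence classes w.r.t. \cong of spaces in U with
   k+1 points": a family of n pairwise non-\cong representatives that meets
   every class. *)
Definition num_classes_U (R : realType) (k n : nat) : Prop :=
  exists f : 'I_n -> ultrametric R,
    (forall i, in_U (f i) /\ #|um_carrier (f i)| = k.+1) /\
    (forall i j, um_cong (f i) (f j) -> i = j) /\
    (forall X : ultrametric R, in_U X -> #|um_carrier X| = k.+1 ->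
        exists i, um_cong X (f i)).

Definition B (R : realType) (k : nat) : nat := xget 0%N (num_classes_U R k).

(* Main.v *)
Require Import Defs.
From HB Require Import structures.
From mathcomp Require Import all_boot all_order all_algebra.
From mathcomp Require Import boolp reals.
From mathcomp Require classical_sets.
From mathcomp Require Import zify lra.
From Stdlib Require List Sorting.Permutation.
Set Implicit Arguments. Unset Strict Implicit. Unset Printing Implicit Defensive.

Inductive bt : Type := Leaf | Node of bt & bt.

Fixpoint bt_eq (t u : bt) : bool :=
  match t, u with
  | Leaf, Leaf => true
  | Node a b, Node c e => bt_eq a c && bt_eq b e
  | _, _ => false
  end.

Lemma bt_eqP : Equality.axiom bt_eq.
Proof.
elim=> [|a IHa b IHb] [|c e] /=; try by constructor.
apply: (iffP andP) => [[/IHa -> /IHb ->]//|[<- <-]].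
by split; [apply/IHa | apply/IHb].
Qed.
HB.instance Definition _ := hasDecEq.Build bt bt_eqP.

Fixpoint toR (t : bt) : rtree :=
  match t with Leaf => RNode [::] | Node l r => RNode [:: toR l; toR r] end.

Fixpoint leaves (t : bt) : nat :=
  match t with Leaf => 1%N | Node l r => (leaves l + leaves r)%N end.

Fixpoint biso (t u : bt) : bool :=
  match t, u with
  | Leaf, Leaf => true
  | Node a b, Node c e => (biso a c && biso b e) || (biso a e && biso b c)
  | _, _ => false
  end.

Lemma biso_refl t : biso t t.
Proof. by elim: t => //= a -> b ->. Qed.

Lemma biso_sym t u : biso t u = biso u t.
Proof.
elim: t u => [|a IHa b IHb] [|c e] //=.
by rewrite IHa IHb (IHa e) (IHb c) andbC [biso e a && _]andbC.
Qed.

Lemma biso_trans t u v : biso t u -> biso u v -> biso t v.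
Proof.
elim: t u v => [|a IHa b IHb] [|c e] [|f g] //=.
case/orP=> /andP[h1 h2] /orP[] /andP[h3 h4]; apply/orP.
- by left; rewrite (IHa _ _ h1 h3) (IHb _ _ h2 h4).
- by right; rewrite (IHa _ _ h1 h3) (IHb _ _ h2 h4).
- by right; rewrite (IHa _ _ h1 h4) (IHb _ _ h2 h3).
- by left; rewrite (IHa _ _ h1 h4) (IHb _ _ h2 h3).
Qed.

Lemma biso_leaves t u : biso t u -> leaves t = leaves u.
Proof.
elim: t u => [|a IHa b IHb] [|c e] //= /orP[] /andP[/IHa -> /IHb ->] //.
by rewrite addnC.
Qed.

Lemma toR_iso t u : rtree_iso (toR t) (toR u) <-> biso t u.
Proof.
split.
- elim: t u => [|a IHa b IHb] [|c e] /= H; inversion H as [ts us us' HP HF]; subst => //.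
  + inversion HF; subst. by have := Permutation.Permutation_length HP.
  + inversion HF; subst. by have := Permutation.Permutation_length HP.
  + inversion HF as [|x y l l' Hxy HF2]; subst.
    inversion HF2 as [|x2 y2 l2 l2' Hxy2 HF3]; subst.
    inversion HF3; subst.
    have [[E1 E2]|[E1 E2]] := Permutation.Permutation_length_2_inv
                                (Permutation.Permutation_sym HP); subst.
    * by rewrite (IHa _ Hxy) (IHb _ Hxy2).
    * by rewrite (IHa _ Hxy) (IHb _ Hxy2) orbT.
- elim: t u => [|a IHa b IHb] [|c e] //= H.
  + by apply: (rtree_iso_node (us' := [::])); constructor.
  + case/orP: H => /andP[/IHa h1 /IHb h2].
    * apply: (rtree_iso_node (us' := [:: toR c; toR e])); first by [].
      by repeat constructor.
    * apply: (rtree_iso_node (us' := [:: toR e; toR c])); first by constructor.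
      by repeat constructor.
Qed.

Fixpoint pairs (s : seq bt) : seq bt :=
  if s is x :: s' then [seq Node x y | y <- x :: s'] ++ pairs s' else [::].

Lemma pairs_cons z s : pairs (z :: s) = [seq Node z y | y <- z :: s] ++ pairs s.
Proof. by []. Qed.

Lemma pairs_mem s u : u \in pairs s -> exists x y, [/\ u = Node x y, x \in s & y \in s].
Proof.
elim: s => // z s IH; rewrite pairs_cons mem_cat => /orP[/mapP[y Hy ->]|/IH[x [y [-> Hx Hy]]]].
  by exists z, y; rewrite inE eqxx.
by exists x, y; rewrite !inE Hx Hy !orbT.
Qed.

Lemma pairs_index s x y : uniq s -> Node x y \in pairs s ->
  [/\ x \in s, y \in s & index x s <= index y s].
Proof.
elim: s => // z s IH /andP[zs us]; rewrite pairs_cons mem_cat.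
case/orP=> [/mapP[y' Hy [-> ->]]|H].
  by split; [exact: mem_head | exact: Hy | rewrite /= eqxx].
have [xs ys ixy] := IH us H.
rewrite !inE xs ys !orbT; split=> //=.
have -> : (z == x) = false by apply/negbTE; apply: contraNneq zs => ->.
have -> : (z == y) = false by apply/negbTE; apply: contraNneq zs => ->.
by [].
Qed.

Lemma pairs_sym s x y : uniq s -> Node x y \in pairs s -> Node y x \in pairs s -> x = y.
Proof.
move=> us /(pairs_index us)[xs ys i1] /(pairs_index us)[_ _ i2].
have E : index x s = index y s by apply/eqP; rewrite eqn_leq i1 i2.
by rewrite -(nth_index x xs) E nth_index.
Qed.

Lemma pairs_compl s x y : x \in s -> y \in s ->
  Node x y \in pairs s \/ Node y x \in pairs s.
Proof.
elim: s => // z s IH; rewrite !pairs_cons !mem_cat !(in_cons z).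
case/orP=> [/eqP->|xs]; case/orP=> [/eqP->|ys].
- by left; rewrite map_f // inE eqxx.
- by left; rewrite map_f // inE ys orbT.
- by right; rewrite map_f // inE xs orbT.
- by case: (IH xs ys) => H; [left|right]; rewrite H orbT.
Qed.

Lemma pairs_uniq s : uniq s -> uniq (pairs s).
Proof.
elim: s => // z s IH /andP[zs us]; rewrite pairs_cons cat_uniq IH // andbT.
apply/andP; split.
  rewrite map_inj_uniq /= ?zs ?us //; by move=> a b [].
apply/hasPn => u /pairs_mem[x [y [-> xs _]]].
apply/mapP => [[w _ [E _]]]; by move: zs; rewrite -E xs.
Qed.

Lemma pairs_size s : (size (pairs s)).*2 = size s * (size s).+1.
Proof.
elim: s => // z s IH; rewrite pairs_cons size_cat size_map /= doubleD IH; lia.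
Qed.

Definition other (Tf : nat -> seq bt) (k : nat) : seq bt :=
  flatten [seq [seq Node x y | x <- Tf a, y <- Tf (k.-1 - a)] | a <- iota 0 k./2].

Definition step (Tf : nat -> seq bt) (k : nat) : seq bt :=
  other Tf k ++ (if odd k then pairs (Tf k./2) else [::]).

Fixpoint Tall (k : nat) : seq (seq bt) :=
  if k is k'.+1 then rcons (Tall k') (step (nth [::] (Tall k')) k) else [:: [:: Leaf]].

Definition T (k : nat) : seq bt := nth [::] (Tall k) k.

Lemma size_Tall k : size (Tall k) = k.+1.
Proof. by elim: k => //= k IH; rewrite size_rcons IH. Qed.

Lemma Tall_nth k j : j <= k -> nth [::] (Tall k) j = T j.
Proof.
elim: k => [|k IH]; first by rewrite leqn0 => /eqP->.
rewrite leq_eqVlt => /orP[/eqP->//|]; rewrite ltnS => hj.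
by rewrite /= nth_rcons size_Tall ltnS hj IH.
Qed.

Lemma other_ext Tf Tg k : 0 < k -> (forall j, j < k -> Tf j = Tg j) -> other Tf k = other Tg k.
Proof.
move=> k0 E; rewrite /other; congr flatten; apply/eq_in_map => a.
rewrite mem_iota add0n => ha; rewrite !E //; lia.
Qed.

Lemma step_ext Tf Tg k : 0 < k -> (forall j, j < k -> Tf j = Tg j) -> step Tf k = step Tg k.
Proof.
move=> k0 E; rewrite /step (other_ext k0 E) E //; lia.
Qed.

Lemma T_step k : 0 < k -> T k = step T k.
Proof.
case: k => // k _; rewrite /T /= nth_rcons size_Tall ltnn eqxx.
by apply: step_ext => // j hj; apply: Tall_nth; lia.
Qed.

Lemma other_mem Tf k u : u \in other Tf k <->
  exists a x y, [/\ a < k./2, x \in Tf a, y \in Tf (k.-1 - a) & u = Node x y].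
Proof.
split.
  case/flatten_mapP => a; rewrite mem_iota add0n => ha /allpairsP[[x y] /= [hx hy ->]].
  by exists a, x, y.
case=> a [x [y [ha hx hy ->]]]; apply/flatten_mapP; exists a; first by rewrite mem_iota.
by apply/allpairsP; exists (x, y).
Qed.

Lemma uniq_flatten_map (A B : eqType) (F : A -> seq B) s :
  uniq s -> (forall a, a \in s -> uniq (F a)) ->
  (forall a b x, a \in s -> b \in s -> x \in F a -> x \in F b -> a = b) ->
  uniq (flatten (map F s)).
Proof.
elim: s => //= a s IH /andP[as_ us] HF Hd; rewrite cat_uniq HF ?inE ?eqxx //=.
rewrite IH // ?andbT; last first.
- by move=> b c x bs cs; apply: Hd; rewrite inE ?bs ?cs orbT.
- by move=> b bs; apply: HF; rewrite inE bs orbT.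
apply/hasPn => x /flatten_mapP[b bs xb]; apply/negP => xa.
have E : a = b by apply: (Hd a b x) => //; rewrite ?mem_head // inE bs orbT.
by move: as_; rewrite E bs.
Qed.

Lemma leaves_gt0 t : 0 < leaves t.
Proof. elim: t => //= a Ha b Hb; lia. Qed.

Lemma leaves1 t : leaves t = 1 -> t = Leaf.
Proof. case: t => //= a b; have := leaves_gt0 a; have := leaves_gt0 b; lia. Qed.

Lemma T_mem k u : 0 < k -> u \in T k ->
  (exists a x y, [/\ a < k./2, x \in T a, y \in T (k.-1 - a) & u = Node x y]) \/
  (odd k /\ u \in pairs (T k./2)).
Proof.
move=> k0; rewrite T_step // /step mem_cat => /orP[/other_mem H|]; first by left.
by case: ifP => // ok H; right.
Qed.

Definition Tprop k := [/\ (forall u, u \in T k -> leaves u = k.+1), uniq (T k),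
  (forall u v, u \in T k -> v \in T k -> biso u v -> u = v) &
  (forall t, leaves t = k.+1 -> exists2 u, u \in T k & biso t u)].

Lemma T0 : T 0 = [:: Leaf]. Proof. by []. Qed.

Lemma half_facts k : k = (k./2).*2 + odd k.
Proof. by rewrite addnC odd_double_half. Qed.

Lemma T_props k : Tprop k.
Proof.
elim/ltn_ind: k => k IH.
case: k IH => [|k] IH.
  split; rewrite ?T0 //.
  - by move=> u; rewrite inE => /eqP->.
  - by move=> u v; rewrite !inE => /eqP-> /eqP->.
  - by move=> t /leaves1 ->; exists Leaf; rewrite ?inE.
set K := k.+1; have K0 : 0 < K by [].
have hK := half_facts K.
have Hnode : forall u, u \in T K -> exists x y, [/\ u = Node x y,
    x \in T (leaves x).-1, y \in T (leaves y).-1,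
    leaves x + leaves y = K.+1 &
    (leaves x < leaves y \/ (leaves x = leaves y /\ odd K /\ u \in pairs (T K./2)))].
  move=> u /(T_mem K0) [[a [x [y [ha hx hy ->]]]]|[oK hu]].
  - have [lx _ _ _] := IH a ltac:(lia); have [ly _ _ _] := IH (K.-1 - a) ltac:(lia).
    exists x, y; rewrite (lx _ hx) (ly _ hy) /=; split => //; try (left; lia); try lia.
  - have [x [y [E xs ys]]] := pairs_mem hu; subst u.
    have [lx _ _ _] := IH K./2 ltac:(lia).
    exists x, y; rewrite (lx _ xs) (lx _ ys) /=; split => //; try lia.
    by right.
split.
- move=> u /Hnode[x [y [-> _ _ s _]]] /=; exact: s.
- rewrite T_step // /step cat_uniq; apply/and3P; split.
  + rewrite /other; apply: uniq_flatten_map.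
    * by apply: iota_uniq.
    * move=> a; rewrite mem_iota add0n => ha.
      have [_ u1 _ _] := IH a ltac:(lia); have [_ u2 _ _] := IH (K.-1 - a) ltac:(lia).
      rewrite allpairs_uniq // => [[x y] [x' y']] _ _ /= [-> ->] //.
    * move=> a b u; rewrite !mem_iota !add0n => ha hb.
      move=> /allpairsP[[x y] /= [hx _ ->]] /allpairsP[[x' y'] /= [hx' _ [E _]]].
      have [l1 _ _ _] := IH a ltac:(lia); have [l2 _ _ _] := IH b ltac:(lia).
      have := l1 _ hx; have := l2 _ hx'; rewrite E; lia.
  + apply/hasPn => u hp; apply/negP => ho.
    case: ifP hp => // oK hp.
    have [x [y [E xs ys]]] := pairs_mem hp; subst u.
    have /other_mem [a [x' [y' [ha hx hy [E1 E2]]]]] := ho; subst x' y'.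
    have [l1 _ _ _] := IH K./2 ltac:(lia).
    have [l2 _ _ _] := IH a ltac:(lia).
    have [l3 _ _ _] := IH (K.-1 - a) ltac:(lia).
    have := l1 _ xs; have := l2 _ hx; have := l1 _ ys; have := l3 _ hy; lia.
  + by case: ifP => // _; apply: pairs_uniq; have [] := IH K./2 ltac:(lia).
- move=> u v /Hnode[x [y [-> hx hy sxy cxy]]] /Hnode[x' [y' [-> hx' hy' sxy' cxy']]] /=.
  have := leaves_gt0 x; have := leaves_gt0 y; have := leaves_gt0 x'; have := leaves_gt0 y'.
  move=> g1 g2 g3 g4.
  case/orP => /andP[i1 i2].
  + have e1 := biso_leaves i1; have e2 := biso_leaves i2.
    have [_ _ f1 _] := IH (leaves x).-1 ltac:(lia).
    have [_ _ f2 _] := IH (leaves y).-1 ltac:(lia).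
    have E1 : x = x' by apply: (f1 _ _ hx _ i1); rewrite e1.
    have E2 : y = y' by apply: (f2 _ _ hy _ i2); rewrite e2.
    by rewrite E1 E2.
  + have e1 := biso_leaves i1; have e2 := biso_leaves i2.
    case: cxy => [c1|[c1 [oK pu]]]; first by case: cxy' => [c2|[c2 _]]; lia.
    case: cxy' => [c2|[c2 [_ pv]]]; first lia.
    have [_ _ f1 _] := IH (leaves x).-1 ltac:(lia).
    have E1 : x = y' by apply: (f1 _ _ hx _ i1); rewrite e1.
    have E2 : y = x'.
      by apply: (f1 y x' _ _ i2); [rewrite c1 | rewrite c1 e2].
    subst y' x'.
    have [_ uT _ _] := IH K./2 ltac:(lia).
    by rewrite (pairs_sym uT pu pv).
- case=> [|l r] /=; first lia.
  move=> hl.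
  have [_ _ _ cl] := IH (leaves l).-1 ltac:(have := leaves_gt0 r; lia).
  have [_ _ _ cr] := IH (leaves r).-1 ltac:(have := leaves_gt0 l; lia).
  have [x xl il] := cl l ltac:(have := leaves_gt0 l; lia).
  have [y yr ir] := cr r ltac:(have := leaves_gt0 r; lia).
  have gl := leaves_gt0 l; have gr := leaves_gt0 r.
  have biNLR : biso (Node l r) (Node x y) by rewrite /= il ir.
  have biNRL : biso (Node l r) (Node y x) by rewrite /= il ir orbT.
  rewrite T_step // /step.
  case: (ltngtP (leaves l) (leaves r)) => c.
  + exists (Node x y) => //; rewrite mem_cat; apply/orP; left; apply/other_mem.
    exists (leaves l).-1, x, y; split => //; first lia.
    by have -> : K.-1 - (leaves l).-1 = (leaves r).-1 by lia.
  + exists (Node y x) => //; rewrite mem_cat; apply/orP; left; apply/other_mem.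
    exists (leaves r).-1, y, x; split => //; first lia.
    by have -> : K.-1 - (leaves r).-1 = (leaves l).-1 by lia.
  + have oK : odd K.
      by case E: (odd K) => //; rewrite E in hK; lia.
    have h2 : K./2 = (leaves l).-1 by lia.
    have h3 : K./2 = (leaves r).-1 by lia.
    rewrite oK; rewrite -h2 in xl; rewrite -h3 in yr.
    case: (pairs_compl xl yr) => H.
    * by exists (Node x y) => //; rewrite mem_cat H orbT.
    * by exists (Node y x) => //; rewrite mem_cat H orbT.
Qed.

Import Order.TTheory GRing.Theory Num.Theory.
Local Open Scope ring_scope.

Section BigMax.
Variables (R : realType) (I : eqType).

Lemma bmax_ub (r : seq I) (P : pred I) (F : I -> R) i :
  i \in r -> P i -> F i <= \big[Num.max/0]_(j <- r | P j) F j.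
Proof.
elim: r => // a r IH; rewrite inE big_cons => /orP[/eqP->|ir] Pi.
  by rewrite Pi le_max lexx.
case: ifP => _; last exact: IH.
by rewrite le_max IH ?orbT.
Qed.

Lemma bmax_le (r : seq I) (P : pred I) (F : I -> R) M : 0 <= M ->
  (forall i, P i -> F i <= M) -> \big[Num.max/0]_(j <- r | P j) F j <= M.
Proof.
move=> M0 H; apply: (big_ind (fun v => v <= M)) => // x y hx hy.
by rewrite ge_max hx hy.
Qed.

Lemma bmax_attain (r : seq I) (P : pred I) (F : I -> R) :
  (forall i, P i -> 0 <= F i) -> (exists2 i, i \in r & P i) ->
  exists2 i, (i \in r) && P i & \big[Num.max/0]_(j <- r | P j) F j = F i.
Proof.
move=> F0 [i0 ir0 Pi0].
have : \big[Num.max/0]_(j <- r | P j) F j = 0 \/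
       exists2 i, (i \in r) && P i & \big[Num.max/0]_(j <- r | P j) F j = F i.
  rewrite big_seq_cond; apply: (big_ind (fun v => v = 0 \/ exists2 i, (i \in r) && P i & v = F i)).
  - by left.
  - move=> x y hx hy; case: (leP x y) => _; [exact: hy | exact: hx].
  - by move=> i hi; right; exists i.
case=> // E; exists i0; first by rewrite ir0 Pi0.
apply/eqP; rewrite eq_le {1}E F0 //=; exact: bmax_ub.
Qed.

Lemma bmax_ge0 (r : seq I) (P : pred I) (F : I -> R) :
  0 <= \big[Num.max/0]_(j <- r | P j) F j.
Proof. by elim: r => [|a r IH]; rewrite ?big_nil ?big_cons //; case: ifP; rewrite // le_max IH orbT. Qed.
End BigMax.

Section Metric.
Variables (R : realType) (X : ultrametric R).
Local Notation d := (@um_dist R X).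
Local Notation car := (um_carrier X).
Implicit Types (A B : {set car}) (x y z : car).

Lemma d_ge0 x y : 0 <= d x y. Proof. exact: um_ge0. Qed.
Lemma d_xx x : d x x = 0. Proof. by apply/um_eq0. Qed.
Lemma d_sym x y : d x y = d y x. Proof. exact: um_sym. Qed.
Lemma d_eq0 x y : (d x y == 0) = (x == y).
Proof. by apply/eqP/eqP => [/um_eq0|->] //; rewrite d_xx. Qed.
Lemma d_gt0 x y : x != y -> 0 < d x y.
Proof. by move=> nxy; rewrite lt_neqAle eq_sym d_eq0 nxy d_ge0. Qed.
Lemma d_ultra x y z : d x z <= Num.max (d x y) (d y z). Proof. exact: um_ultra. Qed.

Lemma diam_ge0 A : 0 <= diam A. Proof. exact: bmax_ge0. Qed.

Lemma diam_ub A x y : x \in A -> y \in A -> d x y <= diam A.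
Proof.
move=> xA yA; apply: le_trans (bmax_ub _ (mem_index_enum x) xA).
exact: (bmax_ub (fun y => d x y) (mem_index_enum y) yA).
Qed.

Lemma diam_le A M : 0 <= M -> (forall x y, x \in A -> y \in A -> d x y <= M) -> diam A <= M.
Proof.
move=> M0 H; apply: bmax_le => // x xA; apply: bmax_le => // y yA; exact: H.
Qed.

Lemma diam_attain A x0 : x0 \in A -> exists x y, [/\ x \in A, y \in A & diam A = d x y].
Proof.
move=> x0A; rewrite /diam.
have [x /andP[_ xA] ->] := @bmax_attain R car (index_enum car) (mem A)
   (fun x => \big[Num.max/0]_(y in A) d x y) (fun x _ => bmax_ge0 _ _ _)
   (ex_intro2 _ _ x0 (mem_index_enum x0) x0A).
have [y /andP[_ yA] ->] := @bmax_attain R car (index_enum car) (mem A)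
   (fun y => d x y) (fun y _ => d_ge0 x y)
   (ex_intro2 _ _ x0 (mem_index_enum x0) x0A).
by exists x, y.
Qed.

Lemma diam_eq A D x0 y0 : (forall x y, x \in A -> y \in A -> d x y <= D) ->
  x0 \in A -> y0 \in A -> d x0 y0 = D -> diam A = D.
Proof.
move=> H x0A y0A E; apply/eqP; rewrite eq_le diam_le //=.
  by rewrite -E diam_ub.
by rewrite -E d_ge0.
Qed.

Definition sp A : seq R :=
  undup [seq d p.1 p.2 | p <- enum [pred p : (car * car)%type | (p.1 \in A) && (p.2 \in A) && (p.1 != p.2)]].

Lemma sp_uniq A : uniq (sp A). Proof. exact: undup_uniq. Qed.

Lemma mem_sp A v : v \in sp A <-> exists x y, [/\ x \in A, y \in A, x != y & v = d x y].
Proof.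
rewrite mem_undup; split.
  by case/mapP => [[x y]]; rewrite mem_enum /= => /andP[/andP[xA yA] nxy] ->; exists x, y.
case=> x [y [xA yA nxy ->]]; apply/mapP; exists (x, y) => //.
by rewrite mem_enum inE /= xA yA nxy.
Qed.

Lemma sp_pos A v : v \in sp A -> 0 < v.
Proof. by case/mem_sp => x [y [_ _ nxy ->]]; exact: d_gt0. Qed.

Lemma sp_le A v : v \in sp A -> v <= diam A.
Proof. by case/mem_sp => x [y [xA yA _ ->]]; exact: diam_ub. Qed.

Lemma spectrum_sp : spectrum X = sp setT.
Proof.
rewrite /spectrum /sp; congr (undup (map _ _)); apply: eq_enum => p.
by rewrite !inE.
Qed.


Definition cls A x := [set y in A | d x y < diam A].

Lemma sp_small A : (#|A| <= 1)%N -> sp A = [::].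
Proof.
move=> /card_le1_eqP H; apply/eqP/negPn/negP; case: (sp A) (@mem_sp A) => // v s /(_ v).
by rewrite inE eqxx => /iffLR[]// x [y [xA yA nxy _]]; rewrite (H x y xA yA) eqxx in nxy.
Qed.

Section Big.
Variables (A : {set car}) (HA : (1 < #|A|)%N).

Lemma diam_gt0 : 0 < diam A.
Proof.
have [x [y [xA yA nxy]]] := card_gt1P HA.
exact: lt_le_trans (d_gt0 nxy) (diam_ub xA yA).
Qed.

Lemma cls_equiv : {in A & &, equivalence_rel (fun x y => d x y < diam A)}.
Proof.
move=> x y z xA yA zA; split; first by rewrite d_xx diam_gt0.
move=> hxy; apply/idP/idP => h.
- apply: le_lt_trans (d_ultra y x z) _; by rewrite gt_max d_sym hxy h.
- apply: le_lt_trans (d_ultra x y z) _; by rewrite gt_max hxy h.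
Qed.

Lemma classes_part : partition (um_classes A) A.
Proof. exact: (equivalence_partitionP cls_equiv). Qed.

Lemma card_classes_sum : #|A| = (\sum_(B in um_classes A) #|B|)%N.
Proof. exact: card_partition classes_part. Qed.

Lemma cls_self x : x \in A -> x \in cls A x.
Proof. by move=> xA; rewrite inE xA d_xx diam_gt0. Qed.

Lemma cls_in x : x \in A -> cls A x \in um_classes A.
Proof. by move=> xA; apply: imset_f. Qed.

Lemma cls_far x y : x \in A -> y \in A -> y \notin cls A x -> d x y = diam A.
Proof.
move=> xA yA; rewrite inE yA /= -leNgt => h; apply/eqP; rewrite eq_le h diam_ub //.
Qed.

Lemma classes_sub B : B \in um_classes A -> B \subset A.
Proof. by case/imsetP => x _ ->; apply/subsetP => y; rewrite inE => /andP[]. Qed.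

Lemma classes_ge2 : (1 < #|um_classes A|)%N.
Proof.
have [x0 [y0 [x0A _ _]]] := card_gt1P HA.
have [x [y [xA yA E]]] := diam_attain x0A.
apply/card_gt1P; exists (cls A x), (cls A y); split; try exact: cls_in.
apply/eqP => Exy; have := cls_self yA; rewrite -Exy inE yA /= -E ltxx //.
Qed.

Lemma classes_card B : B \in um_classes A -> ((0 < #|B|) && (#|B| < #|A|))%N.
Proof.
case/imsetP => x xA ->; apply/andP; split.
  by apply/card_gt0P; exists x; exact: cls_self.
apply: proper_card; rewrite properE; apply/andP; split.
  by apply/subsetP => y; rewrite inE => /andP[].
have [x0 [y0 [x0A _ _]]] := card_gt1P HA.
have [u [v [uA vA E]]] := diam_attain x0A.
apply/negP => /subsetP sub.
have := sub _ uA; have := sub _ vA; rewrite !inE uA vA /= => hv hu.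
have := d_ultra u x v; rewrite -E leNgt gt_max d_sym hu hv //.
Qed.

Lemma sp_sub : {subset sp A <= diam A :: flatten [seq sp B | B <- enum (um_classes A)]}.
Proof.
move=> v /mem_sp[x [y [xA yA nxy ->]]]; rewrite inE.
case: (boolP (y \in cls A x)) => hy.
  apply/orP; right; apply/flatten_mapP; exists (cls A x); first by rewrite mem_enum cls_in.
  by apply/mem_sp; exists x, y; split => //; exact: cls_self.
by rewrite cls_far // eqxx.
Qed.

Lemma sp_size_le : (size (sp A) <= (\sum_(B in um_classes A) size (sp B)).+1)%N.
Proof.
have := uniq_leq_size (sp_uniq A) sp_sub; rewrite /= size_flatten /shape -map_comp.
by rewrite sumnE big_map big_enum.
Qed.
End Big.

Lemma sum_classes_le A : (1 < #|A|)%N ->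
  (forall B, B \in um_classes A -> (size (sp B) < #|B|)%N) ->
  (\sum_(B in um_classes A) size (sp B) + #|um_classes A| <= #|A|)%N.
Proof.
move=> h1 IH.
rewrite [X in (_ <= X)%N](card_classes_sum h1) -sum1_card -big_split /=.
by apply: leq_sum => B hB; rewrite addn1; apply: IH.
Qed.

Lemma sp_bound A : (0 < #|A|)%N -> (size (sp A) < #|A|)%N.
Proof.
move: {2}#|A| (leqnn #|A|) => n; elim: n A => [|n IH] A hA A0; first lia.
case: (leqP #|A| 1) => h1; first by rewrite sp_small.
have h1' := sp_size_le h1.
have h2 := sum_classes_le h1 (fun B hB => let: conj b0 b1 := andP (classes_card h1 hB) in
     IH B ltac:(lia) b0).
have := classes_ge2 h1; lia.
Qed.

Definition tight A := size (sp A) = (#|A|).-1.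

Lemma sum_eq_pointwise (I : finType) (P : pred I) (f g : I -> nat) :
  (forall i, P i -> (f i <= g i)%N) ->
  (\sum_(i | P i) g i <= \sum_(i | P i) f i)%N -> forall i, P i -> f i = g i.
Proof.
move=> H Hs i Pi; apply/eqP; rewrite eqn_leq H //=; apply: contraTT Hs.
rewrite -!ltnNge => lt; rewrite (bigD1 i Pi) [X in (_ < X)%N](bigD1 i Pi) /=.
have := @leq_sum _ (index_enum I) (fun j => P j && (j != i)) f g (fun j hj => H j (proj1 (andP hj))).
lia.
Qed.

Lemma tight_classes A : (1 < #|A|)%N -> tight A ->
  #|um_classes A| = 2 /\ forall B, B \in um_classes A -> tight B.
Proof.
move=> h1 tA.
have bnd : forall B, B \in um_classes A -> (size (sp B) < #|B|)%N.
  by move=> B hB; apply: sp_bound; case/andP: (classes_card h1 hB).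
have h1' := sp_size_le h1; have h2 := sum_classes_le h1 bnd.
have g2 := classes_ge2 h1; rewrite /tight in tA.
split; first lia.
have E : (\sum_(B in um_classes A) #|B| <= \sum_(B in um_classes A) (size (sp B)).+1)%N.
  have -> : (\sum_(B in um_classes A) (size (sp B)).+1 =
     \sum_(B in um_classes A) size (sp B) + #|um_classes A|)%N.
    by rewrite -sum1_card -big_split; apply: eq_bigr => ? _; rewrite /= addn1.
  rewrite -(card_classes_sum h1); lia.
move=> B hB; have := sum_eq_pointwise bnd E hB; rewrite /tight; lia.
Qed.

Fixpoint btf (n : nat) (A : {set car}) : bt :=
  match n with
  | 0 => Leaf
  | n'.+1 => if (#|A| <= 1)%N then Leaf else
      match enum (um_classes A) with
      | [:: B1; B2] => Node (btf n' B1) (btf n' B2)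
      | _ => Leaf
      end
  end.

Lemma enum_classes2 A : #|um_classes A| = 2 ->
  exists B1 B2, [/\ enum (um_classes A) = [:: B1; B2], B1 \in um_classes A & B2 \in um_classes A].
Proof.
rewrite cardE; case E: (enum (um_classes A)) => [|B1 [|B2 [|? ?]]] // _.
by exists B1, B2; split => //; rewrite -mem_enum E !inE eqxx ?orbT.
Qed.

Lemma classes2_sum A : (1 < #|A|)%N -> forall B1 B2, enum (um_classes A) = [:: B1; B2] ->
  #|A| = (#|B1| + #|B2|)%N.
Proof.
move=> h1 B1 B2 E; rewrite (card_classes_sum h1) -big_enum E !big_cons big_nil /= addn0 //.
Qed.

Lemma tree_eq n A : (0 < #|A|)%N -> (#|A| <= n)%N -> tight A ->
  rep_tree_fuel n A = toR (btf n A) /\ leaves (btf n A) = #|A|.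
Proof.
elim: n A => [|n IH] A A0 An tA; first lia.
rewrite /=; case: ifP => h1; first by split => //=; lia.
move/negbT: h1; rewrite -ltnNge => h1.
have [c2 tB] := tight_classes h1 tA.
have [B1 [B2 [E b1 b2]]] := enum_classes2 c2.
have /andP[p1 q1] := classes_card h1 b1; have /andP[p2 q2] := classes_card h1 b2.
have [r1 l1] := IH B1 p1 ltac:(lia) (tB _ b1).
have [r2 l2] := IH B2 p2 ltac:(lia) (tB _ b2).
by rewrite E /= r1 r2 l1 l2 (classes2_sum h1 E).
Qed.

Lemma btf_fuel n m A : (#|A| <= n)%N -> (#|A| <= m)%N -> btf n A = btf m A.
Proof.
elim: n m A => [|n IH] [|m] A An Am //=.
- by have -> : (#|A| <= 1)%N by lia.
- by have -> : (#|A| <= 1)%N by lia.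
case: ifP => // /negbT; rewrite -ltnNge => h1.
case E: (enum (um_classes A)) => [|B1 [|B2 [|? ?]]] //.
have b1 : B1 \in um_classes A by rewrite -mem_enum E mem_head.
have b2 : B2 \in um_classes A by rewrite -mem_enum E !inE eqxx orbT.
have /andP[p1 q1] := classes_card h1 b1; have /andP[p2 q2] := classes_card h1 b2.
by rewrite (IH m B1) ?(IH m B2) //; lia.
Qed.

End Metric.

Lemma enum_imset2 (T U : finType) (f : T -> U) (S : {set T}) a b :
  injective f -> enum S = [:: a; b] ->
  enum (f @: S) = [:: f a; f b] \/ enum (f @: S) = [:: f b; f a].
Proof.
move=> fi ES.
have s2 : size (enum (f @: S)) = 2 by rewrite -cardE card_imset // cardE ES.
have memS u : u \in S -> u = a \/ u = b.
  by rewrite -mem_enum ES !inE => /orP[]/eqP->; [left|right].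
have Sa : a \in S by rewrite -mem_enum ES mem_head.
have Sb : b \in S by rewrite -mem_enum ES !inE ?eqxx ?orbT.
have nab : a != b by have := enum_uniq S; rewrite ES /= inE andbT.
have := enum_uniq (f @: S).
case E: (enum (f @: S)) s2 => [|c [|e [|? ?]]] // _ /andP[nce _].
rewrite inE in nce.
have : e \in enum (f @: S) by rewrite E !inE ?eqxx ?orbT.
rewrite mem_enum.
have : c \in enum (f @: S) by rewrite E mem_head.
rewrite mem_enum => H1 H2; move: H2 H1 nce.
case/imsetP => u /memS[]-> -> /imsetP[v /memS[]-> ->].
- by rewrite eqxx.
- by right.
- by left.
- by rewrite eqxx.
Qed.

Section Embed.
Variables (R : realType) (X Y : ultrametric R).
Variables (h : um_carrier X -> um_carrier Y) (g : R -> R).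
Hypothesis g0 : g 0 = 0.
Hypothesis glt : forall u v, 0 <= u -> 0 <= v -> (g u < g v) = (u < v).
Hypothesis hd : forall a b, um_dist (h a) (h b) = g (um_dist a b).

Lemma gle u v : 0 <= u -> 0 <= v -> (g u <= g v) = (u <= v).
Proof. by move=> u0 v0; rewrite !leNgt glt. Qed.

Lemma h_inj : injective h.
Proof.
move=> a b E; have := hd a b; rewrite E d_xx => H.
case: (boolP (a == b)) => [/eqP//|nab].
have := glt (lexx 0) (d_ge0 a b); rewrite g0 -H ltxx (d_gt0 nab) //.
Qed.

Lemma diam_img (A : {set um_carrier X}) : diam (h @: A) = g (diam A).
Proof.
case: (set_0Vmem A) => [->|[x0 x0A]].
  rewrite imset0; have E : forall (Z : ultrametric R), diam (@set0 (um_carrier Z)) = 0.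
    by move=> Z; apply/eqP; rewrite eq_le diam_ge0 andbT diam_le // => x y; rewrite inE.
  by rewrite !E g0.
have [x [y [xA yA E]]] := diam_attain x0A.
apply: (@diam_eq _ _ _ (g (diam A)) (h x) (h y)); rewrite ?imset_f // ?hd ?E //.
move=> _ _ /imsetP[u uA ->] /imsetP[v vA ->]; rewrite hd gle ?d_ge0 ?diam_ge0 //.
by rewrite -E diam_ub.
Qed.

Lemma cls_img (A : {set um_carrier X}) x : x \in A -> cls (h @: A) (h x) = h @: cls A x.
Proof.
move=> xA; apply/setP => z; rewrite inE diam_img; apply/andP/imsetP.
  case=> /imsetP[y yA ->]; rewrite hd glt ?d_ge0 ?diam_ge0 // => hy.
  by exists y => //; rewrite inE yA.
case=> y; rewrite inE => /andP[yA hy] ->; split; first exact: imset_f.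
by rewrite hd glt ?d_ge0 ?diam_ge0.
Qed.

Lemma classes_img (A : {set um_carrier X}) :
  um_classes (h @: A) = (fun B : {set um_carrier X} => h @: B) @: um_classes A.
Proof.
rewrite /um_classes -imset_comp -imset_comp; apply: eq_in_imset => x xA /=.
exact: cls_img.
Qed.

Lemma btf_img n (A : {set um_carrier X}) : biso (btf n (h @: A)) (btf n A).
Proof.
elim: n A => [|n IH] A //=; rewrite card_imset; last exact: h_inj.
case: ifP => // _; rewrite classes_img.
have ii := imset_inj h_inj.
have sz : size (enum ((fun B : {set um_carrier X} => h @: B) @: um_classes A)) = size (enum (um_classes A)).
  by rewrite -!cardE card_imset.
case E: (enum (um_classes A)) sz => [|B1 [|B2 [|? ?]]];
  try by case: (enum ((fun B : {set um_carrier X} => h @: B) @: um_classes A)) => [|? [|? [|? ?]]].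
move=> _; case: (enum_imset2 ii E) => ->; rewrite /= !IH //.
by rewrite orbT.
Qed.
End Embed.


Lemma enum2_of (T : finType) (S : {set T}) L Rr :
  (forall B, B \in S <-> B = L \/ B = Rr) -> L != Rr ->
  enum S = [:: L; Rr] \/ enum S = [:: Rr; L].
Proof.
move=> HS nLR.
have ES : S = [set L; Rr].
  apply/setP => B; rewrite !inE; apply/idP/idP => [/(HS B)[]->|/orP[]/eqP->];
    rewrite ?eqxx ?orbT //; apply/(HS _); [left|right]; by [].
have s2 : size (enum S) = 2 by rewrite -cardE ES cards2 nLR.
have := enum_uniq S.
case E: (enum S) s2 => [|c [|e [|? ?]]] // _ /andP[nce _]; rewrite inE in nce.
have : e \in enum S by rewrite E !inE ?eqxx ?orbT.
rewrite mem_enum => /(HS _) H1.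
have : c \in enum S by rewrite E mem_head.
rewrite mem_enum => /(HS _) H2; move: H1 H2 nce.
case=> -> [] ->; rewrite ?eqxx //; by [right|left].
Qed.

Section Construct.
Variable R : realType.
Implicit Types X Y : ultrametric R.

Definition M X := diam [set: um_carrier X].
Lemma M_ge0 X : 0 <= M X. Proof. exact: diam_ge0. Qed.
Lemma d_leM X (a b : um_carrier X) : um_dist a b <= M X.
Proof. by apply: diam_ub; rewrite inE. Qed.

Definition sh (c v : R) := if v == 0 then 0 else v + c.
Lemma sh0 c : sh c 0 = 0. Proof. by rewrite /sh eqxx. Qed.
Lemma sh_ge0 c v : 0 < c -> 0 <= v -> 0 <= sh c v.
Proof. by move=> c0 v0; rewrite /sh; case: ifP => // _; lra. Qed.
Lemma sh_eq0 c v : 0 < c -> 0 <= v -> (sh c v == 0) = (v == 0).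
Proof.
move=> c0 v0; rewrite /sh; case: (eqVneq v 0) => [E|nv]; first by subst v; rewrite eqxx.
rewrite ?(negbTE nv); apply/negbTE; rewrite gt_eqF //; have : 0 < v by rewrite lt0r nv v0.
lra.
Qed.
Lemma sh_lt c u v : 0 < c -> 0 <= u -> 0 <= v -> (sh c u < sh c v) = (u < v).
Proof.
move=> c0 u0 v0; rewrite /sh.
case: (eqVneq u 0) => [Eu|nu]; case: (eqVneq v 0) => [Ev|nv];
  try subst u; try subst v; rewrite ?eqxx ?(negbTE nu) ?(negbTE nv) ?ltxx //.
- apply/idP/idP => _; [rewrite lt0r nv v0 // | lra].
- have : 0 < u by rewrite lt0r nu u0.
  move=> up; apply/idP/idP => h; lra.
- by rewrite ltrD2r.
Qed.
Lemma sh_le c u v : 0 < c -> 0 <= u -> 0 <= v -> (sh c u <= sh c v) = (u <= v).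
Proof. by move=> c0 u0 v0; rewrite !leNgt sh_lt. Qed.
Lemma sh_pos_gt c v : 0 < v -> sh c v = v + c.
Proof. by move=> v0; rewrite /sh gt_eqF. Qed.

Section Sum.
Variables X Y : ultrametric R.
Let c := M X + 1.
Let D := M X + M Y + 2.
Lemma c_gt0 : 0 < c. Proof. have := M_ge0 X; rewrite /c; lra. Qed.
Lemma D_gt0 : 0 < D. Proof. have := M_ge0 X; have := M_ge0 Y; rewrite /D; lra. Qed.

Definition sum_d (u v : (um_carrier X + um_carrier Y)%type) : R :=
  match u, v with
  | inl a, inl b => um_dist a b
  | inr a, inr b => sh c (um_dist a b)
  | _, _ => D
  end.

Lemma sumL_lt (a b : um_carrier X) : um_dist a b < D.
Proof. have := d_leM a b; have := M_ge0 Y; rewrite /D; lra. Qed.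
Lemma sumR_lt (a b : um_carrier Y) : sh c (um_dist a b) < D.
Proof.
have := d_leM a b; have := M_ge0 X; have := d_ge0 a b.
rewrite /sh /D /c; case: ifP => _; lra.
Qed.

Lemma sum_ge0 u v : 0 <= sum_d u v.
Proof.
case: u v => a [] b /=; rewrite ?d_ge0 ?sh_ge0 ?d_ge0 ?c_gt0 //; exact: ltW D_gt0.
Qed.

Lemma sum_eq0 u v : sum_d u v = 0 <-> u = v.
Proof.
split.
- case: u v => a [] b /=.
  + by move/um_eq0 ->.
  + by move=> E; have := D_gt0; rewrite E ltxx.
  + by move=> E; have := D_gt0; rewrite E ltxx.
  + by move/eqP; rewrite sh_eq0 ?c_gt0 ?d_ge0 // d_eq0 => /eqP->.
- by move=> ->; case: v => a /=; rewrite d_xx ?sh0.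
Qed.

Lemma sum_sym u v : sum_d u v = sum_d v u.
Proof. by case: u v => a [] b //=; rewrite d_sym. Qed.

Lemma sum_ultra u v w : sum_d u w <= Num.max (sum_d u v) (sum_d v w).
Proof.
have LD := sumL_lt; have RD := sumR_lt.
case: u v w => a [] b [] e /=; rewrite ?lexx ?le_max ?lexx ?orbT //.
all: try (by rewrite ltW).
- by have := d_ultra a b e; rewrite le_max.
- have := d_ultra a b e; rewrite le_max => /orP[] h.
    by rewrite (sh_le c_gt0) ?d_ge0 // h.
  by rewrite [X in _ || X](sh_le c_gt0) ?d_ge0 // h orbT.
Qed.

Definition sumU : ultrametric R :=
  @Ultrametric R (um_carrier X + um_carrier Y)%type sum_d sum_ge0 sum_eq0 sum_sym sum_ultra.

End Sum.
Section SumProps.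
Variables X Y : ultrametric R.
Hypotheses (X0 : (0 < #|um_carrier X|)%N) (Y0 : (0 < #|um_carrier Y|)%N).
Local Notation Z := (sumU X Y).
Local Notation c := (M X + 1).
Local Notation D := (M X + M Y + 2).

Lemma pickX : exists x0 : um_carrier X, true.
Proof. by have [x0 _] := card_gt0P X0; exists x0. Qed.
Lemma pickY : exists y0 : um_carrier Y, true.
Proof. by have [y0 _] := card_gt0P Y0; exists y0. Qed.

Lemma dZ_le (u v : um_carrier Z) : um_dist u v <= D.
Proof.
case: u v => a [] b /=; rewrite ?lexx //; apply: ltW; [exact: sumL_lt | exact: sumR_lt].
Qed.

Lemma diamZ : diam [set: um_carrier Z] = D.
Proof.
have [x0 _] := pickX; have [y0 _] := pickY.
by apply: (@diam_eq _ _ _ _ (inl x0 : um_carrier Z) (inr y0)) => // *; exact: dZ_le.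
Qed.

Lemma clsZ_l a : cls [set: um_carrier Z] (inl a) = inl @: [set: um_carrier X].
Proof.
apply/setP => z; rewrite !inE diamZ; case: z => b /=.
  by rewrite (sumL_lt Y a b) imset_f ?inE.
rewrite ltxx; apply/esym/negbTE/imsetP => [[e _]] //.
Qed.

Lemma clsZ_r a : cls [set: um_carrier Z] (inr a) = inr @: [set: um_carrier Y].
Proof.
apply/setP => z; rewrite !inE diamZ; case: z => b /=.
  rewrite ltxx; apply/esym/negbTE/imsetP => [[e _]] //.
by rewrite (sumR_lt X a b) imset_f ?inE.
Qed.

Lemma enumZ : let L := inl @: [set: um_carrier X] in let Rr := inr @: [set: um_carrier Y] in
  enum (um_classes [set: um_carrier Z]) = [:: L; Rr] \/
  enum (um_classes [set: um_carrier Z]) = [:: Rr; L].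
Proof.
move=> L Rr; apply: enum2_of.
  move=> B; split.
    by case/imsetP => [[a|a] _ ->]; [left; exact: clsZ_l | right; exact: clsZ_r].
  have [x0 _] := pickX; have [y0 _] := pickY.
  case=> ->; [rewrite /L -(clsZ_l x0) | rewrite /Rr -(clsZ_r y0)]; apply: imset_f; by rewrite inE.
have [x0 _] := pickX; apply/negP => /eqP E.
have : (inl x0 : um_carrier Z) \in L by rewrite imset_f ?inE.
by rewrite E => /imsetP[].
Qed.

Lemma btfZ : biso (btf #|um_carrier Z| [set: um_carrier Z])
                  (Node (btf #|um_carrier X| [set: um_carrier X]) (btf #|um_carrier Y| [set: um_carrier Y])).
Proof.
have cZ : #|um_carrier Z| = (#|um_carrier X| + #|um_carrier Y|)%N by rewrite card_sum.
have h1 : (1 < #|[set: um_carrier Z]|)%N by rewrite cardsT cZ; lia.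
rewrite cZ; case E : (#|um_carrier X| + #|um_carrier Y|)%N => [|n]; first lia.
have h1' : (#|[set: um_carrier Z]| <= 1)%N = false by apply/negbTE; rewrite -ltnNge.
rewrite /= h1'.
have bl : biso (@btf _ Z n (inl @: [set: um_carrier X])) (btf #|um_carrier X| [set: um_carrier X]).
  apply: biso_trans (btf_img (X := X) (Y := Z) (g := id) _ _ _ n [set: um_carrier X]) _ => //.
  by rewrite (@btf_fuel _ X n #|um_carrier X|) ?biso_refl ?cardsT; lia.
have br : biso (@btf _ Z n (inr @: [set: um_carrier Y])) (btf #|um_carrier Y| [set: um_carrier Y]).
  apply: biso_trans (btf_img (X := Y) (Y := Z) (g := sh c) (sh0 _) (fun u v => sh_lt (u:=u) (v:=v) (c_gt0 X)) _ n [set: um_carrier Y]) _ => //.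
  by rewrite (@btf_fuel _ Y n #|um_carrier Y|) ?biso_refl ?cardsT; lia.
case: enumZ => -> /=.
  by rewrite bl br.
by rewrite bl br orbT.
Qed.

Lemma sumZ_tight : tight [set: um_carrier X] -> tight [set: um_carrier Y] ->
  tight [set: um_carrier Z].
Proof.
move=> tX tY.
have cZ : #|um_carrier Z| = (#|um_carrier X| + #|um_carrier Y|)%N by rewrite card_sum.
rewrite /tight in tX tY *; rewrite !cardsT in tX tY *.
apply/eqP; rewrite eqn_leq; apply/andP; split.
  have := @sp_bound _ Z [set: um_carrier Z]; rewrite cardsT cZ; lia.
set L := D :: sp [set: um_carrier X] ++ map (sh c) (sp [set: um_carrier Y]).
have spXle v : v \in sp [set: um_carrier X] -> v <= M X by move/sp_le.
have spYle v : v \in sp [set: um_carrier Y] -> v <= M Y by move/sp_le.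
have MX := M_ge0 X; have MY := M_ge0 Y.
have uL : uniq L.
  rewrite /L cons_uniq mem_cat cat_uniq sp_uniq /=; apply/and3P; split.
  - apply/norP; split; apply/negP.
      by move=> /spXle; lra.
    case/mapP => w /[dup] /sp_pos w0 /spYle wle; rewrite sh_pos_gt //; lra.
  - apply/hasPn => u /mapP[w /[dup] /sp_pos w0 /spYle wle ->]; rewrite sh_pos_gt //.
    by apply/negP => /spXle; lra.
  - rewrite map_inj_in_uniq ?sp_uniq // => u w /sp_pos u0 /sp_pos w0.
    by rewrite !sh_pos_gt // => /addIr.
have sub : {subset L <= sp [set: um_carrier Z]}.
  move=> v; rewrite /L inE mem_cat => /orP[/eqP->|/orP[]].
  - have [x0 _] := pickX; have [y0 _] := pickY.
    by apply/mem_sp; exists (inl x0), (inr y0); split; rewrite ?inE.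
  - case/mem_sp => a [b [_ _ nab ->]]; apply/mem_sp; exists (inl a), (inl b); split; rewrite ?inE //.
  - case/mapP => w /mem_sp[a [b [_ _ nab ->]]] ->; apply/mem_sp.
    exists (inr a), (inr b); split; rewrite ?inE //.
have := uniq_leq_size uL sub; rewrite /L /= size_cat size_map tX tY cZ; lia.
Qed.
End SumProps.

End Construct.

Lemma size_T1 : size (T 1) = 1%N. Proof. by []. Qed.
Lemma size_T2 : size (T 2) = 1%N. Proof. by []. Qed.
Lemma size_T3 : size (T 3) = 2%N. Proof. by []. Qed.

Section Final.
Variable R : realType.

Lemma unit_ge0 (x y : unit) : 0 <= (0 : R). Proof. by []. Qed.
Lemma unit_eq0 (x y : unit) : (0 : R) = 0 <-> x = y. Proof. by case: x; case: y. Qed.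
Lemma unit_sym (x y : unit) : (0 : R) = 0. Proof. by []. Qed.
Lemma unit_ultra (x y z : unit) : (0 : R) <= Num.max 0 0. Proof. by rewrite maxxx. Qed.

Definition unitU : ultrametric R :=
  @Ultrametric R unit (fun _ _ => 0) unit_ge0 unit_eq0 unit_sym unit_ultra.

Fixpoint mk (t : bt) : ultrametric R :=
  match t with Leaf => unitU | Node l r => sumU (mk l) (mk r) end.

Definition btX (X : ultrametric R) := btf #|um_carrier X| [set: um_carrier X].

Lemma mk_props t : [/\ #|um_carrier (mk t)| = leaves t, tight [set: um_carrier (mk t)]
   & biso (btX (mk t)) t].
Proof.
elim: t => [|l [cl tl bl] r [cr tr br]].
  have c1 : #|um_carrier (mk Leaf)| = 1%N by rewrite /= card_unit.
  have c2 : #|[set: um_carrier (mk Leaf)]| = 1%N by rewrite (cardsT (um_carrier (mk Leaf))).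
  split => //; first by rewrite /tight sp_small ?c2.
  by rewrite /btX c1 /= c2.
have l0 := leaves_gt0 l; have r0 := leaves_gt0 r.
split.
- by rewrite /= card_sum cl cr.
- by apply: sumZ_tight; rewrite ?cl ?cr.
- apply: biso_trans (btfZ (X := mk l) (Y := mk r) ltac:(by rewrite cl) ltac:(by rewrite cr)) _.
  by move: bl br; rewrite /btX /= => -> ->.
Qed.

Lemma U_tight (X : ultrametric R) : in_U X -> tight [set: um_carrier X].
Proof. by rewrite /in_U /tight spectrum_sp cardsT subn1. Qed.

Lemma tight_U (X : ultrametric R) : tight [set: um_carrier X] -> in_U X.
Proof. by rewrite /in_U /tight spectrum_sp cardsT subn1. Qed.

Lemma U_tree (X : ultrametric R) : in_U X -> (0 < #|um_carrier X|)%N ->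
  rep_tree X = toR (btX X) /\ leaves (btX X) = #|um_carrier X|.
Proof.
move=> UX X0; have := @tree_eq _ X #|um_carrier X| [set: um_carrier X].
by rewrite cardsT; apply => //; exact: U_tight.
Qed.

Lemma cong_iff (X Y : ultrametric R) : in_U X -> in_U Y ->
  (0 < #|um_carrier X|)%N -> (0 < #|um_carrier Y|)%N ->
  um_cong X Y <-> biso (btX X) (btX Y).
Proof.
move=> UX UY X0 Y0; rewrite /um_cong (proj1 (U_tree UX X0)) (proj1 (U_tree UY Y0)).
exact: toR_iso.
Qed.

Lemma mk_U t : in_U (mk t).
Proof. by apply: tight_U; case: (mk_props t). Qed.

Lemma inj_le (n s : nat) (P : 'I_n -> 'I_s -> bool) :
  (forall i, exists j, P i j) -> (forall i i' j, P i j -> P i' j -> i = i') -> (n <= s)%N.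
Proof.
move=> ex inj; case: s P ex inj => [|s] P ex inj.
  case: n P ex inj => [|n] P ex inj //.
  by case: (ex ord0) => -[].
pose f i := odflt ord0 [pick j | P i j].
have Pf i : P i (f i).
  rewrite /f; case: pickP => [j //|H]; have [j hj] := ex i; by rewrite H in hj.
have fi : injective f by move=> i i' E; apply: (inj i i' (f i) (Pf i)); rewrite E; exact: Pf.
by have := leq_card f fi; rewrite !card_ord.
Qed.

Lemma numc k : num_classes_U R k (size (T k)).
Proof.
have [lT uT fT cT] := T_props k.
pose f (i : 'I_(size (T k))) := mk (nth Leaf (T k) i).
have fmem (i : 'I_(size (T k))) : nth Leaf (T k) i \in T k by rewrite mem_nth.
have fcard i : #|um_carrier (f i)| = k.+1.
  by case: (mk_props (nth Leaf (T k) i)) => -> _ _; rewrite lT.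
exists f; split; [|split].
- by move=> i; split; [exact: mk_U | exact: fcard].
- move=> i j /(cong_iff (mk_U _) (mk_U _)); rewrite !fcard => /(_ isT isT) H.
  have [_ _ bi] := mk_props (nth Leaf (T k) i); have [_ _ bj] := mk_props (nth Leaf (T k) j).
  have : biso (nth Leaf (T k) i) (nth Leaf (T k) j).
    apply: biso_trans bj; apply: biso_trans H; by rewrite biso_sym.
  move/(fT _ _ (fmem i) (fmem j))/eqP; rewrite nth_uniq // => /eqP; exact: val_inj.
- move=> X UX cX.
  have [Xt lX] := U_tree UX ltac:(rewrite cX //).
  have [u uk bu] := cT (btX X) ltac:(rewrite lX cX //).
  have iu : (index u (T k) < size (T k))%N by rewrite index_mem.
  exists (Ordinal iu).
  apply/(cong_iff UX (mk_U _)); rewrite ?cX ?fcard //.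
  rewrite /f /= nth_index //.
  have [_ _ bm] := mk_props u; apply: biso_trans bu _; by rewrite biso_sym.
Qed.

Lemma numc_uniq k n : num_classes_U R k n -> n = size (T k).
Proof.
case=> g [gU [ginj gcov]].
have [lT uT fT cT] := T_props k.
have g0 i : (0 < #|um_carrier (g i)|)%N by rewrite (proj2 (gU i)).
have gl i : leaves (btX (g i)) = k.+1.
  by rewrite (proj2 (U_tree (proj1 (gU i)) (g0 i))) (proj2 (gU i)).
have fmem (j : 'I_(size (T k))) : nth Leaf (T k) j \in T k by rewrite mem_nth.
apply/eqP; rewrite eqn_leq; apply/andP; split.
- apply: (@inj_le n (size (T k)) (fun i j => biso (btX (g i)) (nth Leaf (T k) j))).
    move=> i; have [u uk bu] := cT _ (gl i).
    have iu : (index u (T k) < size (T k))%N by rewrite index_mem.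
    by exists (Ordinal iu); rewrite /= nth_index.
  move=> i i' j b1 b2; apply: ginj; apply/(cong_iff (proj1 (gU i)) (proj1 (gU i')) (g0 i) (g0 i')).
  by apply: biso_trans b1 _; rewrite biso_sym.
- apply: (@inj_le (size (T k)) n (fun j i => biso (nth Leaf (T k) j) (btX (g i)))).
    move=> j; have [mc _ bm] := mk_props (nth Leaf (T k) j).
    have mU := mk_U (nth Leaf (T k) j).
    have cm : #|um_carrier (mk (nth Leaf (T k) j))| = k.+1 by rewrite mc lT.
    have [i hi] := gcov _ mU cm; exists i.
    move/(cong_iff mU (proj1 (gU i)) ltac:(by rewrite cm) (g0 i)): hi => hi.
    by apply: biso_trans hi; rewrite biso_sym.
  move=> j j' i b1 b2; apply: val_inj; apply/eqP; rewrite -(nth_uniq Leaf _ _ uT) ?ltn_ord //.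
  apply/eqP; apply: fT; rewrite ?fmem //; apply: biso_trans b1 _; by rewrite biso_sym.
Qed.

Lemma B_eq k : B R k = size (T k).
Proof.
apply: numc_uniq; rewrite /B.
by apply: classical_sets.xgetPex; exists (size (T k)); exact: numc.
Qed.
End Final.

Lemma size_other k : size (other T k) = (\sum_(0 <= a < k./2) size (T a) * size (T (k.-1 - a)))%N.
Proof.
rewrite /other size_flatten /shape -map_comp sumnE big_map /index_iota subn0.
by apply: eq_bigr => a _; rewrite /= size_allpairs.
Qed.

Lemma size_pairs s : size (pairs s) = (size s * (size s).+1 %/ 2)%N.
Proof. by rewrite -pairs_size -muln2 mulnK. Qed.


Local Close Scope ring_scope.

Theorem theorem19 (R : realType) :
  (forall i : nat,
      B R (2 * i + 1) =
        (B R i * (B R i).+1 %/ 2 + \sum_(0 <= j < i) B R (2 * i + 1 - j - 1) * B R j)%N) /\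
  (forall i : nat, (1 <= i)%N ->
      B R (2 * i) = (\sum_(0 <= j < i) B R (2 * i - j - 1) * B R j)%N) /\
  B R 1 = 1%N /\ B R 2 = 1%N /\ B R 3 = 2%N.
Proof.
split; [|split; [|split; [|split]]]; rewrite ?B_eq ?size_T1 ?size_T2 ?size_T3 //.
- move=> i; rewrite (B_eq R (2 * i + 1)) (B_eq R i) T_step ?addn1 // /step size_cat size_other.
  have h2 : (2 * i).+1./2 = i by lia.
  rewrite h2 /= oddM /= size_pairs addnC.
  congr (_ + _)%N; apply: eq_bigr => j _; rewrite !B_eq mulnC; congr (_ * _)%N.
  congr (size (T _)); lia.
- move=> i i1; rewrite (B_eq R (2 * i)) T_step ?muln_gt0 // /step size_cat size_other.
  have h2 : (2 * i)./2 = i by lia.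
  rewrite h2 oddM /= addn0.
  apply: eq_bigr => j _; rewrite !B_eq mulnC; congr (_ * _)%N.
  congr (size (T _)); lia.
Qed.
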